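(* Let $A$ be a compact convex set, $B$ a zonoid and $C$ a compact set in $\mathbb{R}^n$. Then $|A+B+C|+|A|\ge|A+B|+|A+C|$.
   Context: $|\cdot|$ is $n$-dimensional Lebesgue measure and $+$ is Minkowski addition. A zonotope is a Minkowski sum of finitely many line segments; a zonoid is a limit of zonotopes in the Hausdorff metric. *)

(* Defs.v *)
From HB Require Import structures.
From mathcomp Require Import all_boot all_order all_algebra.
From mathcomp Require Import all_classical all_reals all_analysis.
Set Implicit Arguments. Unset Strict Implicit. Unset Printing Implicit Defensive.
Import Order.TTheory GRing.Theory Num.Theory.
Import numFieldNormedType.Exports.
Local Open Scope classical_set_scope.
Local Open Scope ring_scope.

Definition mink_sum (R : realType) (n : nat) (A B : set 'rV[R]_n) : set 'rV[R]_n :=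
  [set a + b | a in A & b in B].

Definition convex_setn (R : realType) (n : nat) (A : set 'rV[R]_n) : Prop :=
  forall x y (t : R), A x -> A y -> 0 <= t -> t <= 1 -> A (t *: x + (1 - t) *: y).

Definition edist (R : realType) (n : nat) (x y : 'rV[R]_n) : R :=
  Num.sqrt (\sum_(i < n) (x ord0 i - y ord0 i) ^+ 2).

(* Zonotope: Minkowski sum of finitely many segments [a_i, b_i]
   (the empty sum being the point {0}). *)
Definition zonotope (R : realType) (n : nat) (Z : set 'rV[R]_n) : Prop :=
  exists (k : nat) (a b : 'I_k -> 'rV[R]_n),
    Z = [set z | exists t : 'I_k -> R, (forall i, 0 <= t i <= 1) /\
                  z = \sum_(i < k) ((1 - t i) *: a i + t i *: b i)].

Definition hausdorff_le (R : realType) (n : nat) (K L : set 'rV[R]_n) (e : R) : Prop :=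
  (forall x, K x -> exists y, L y /\ edist x y <= e) /\
  (forall y, L y -> exists x, K x /\ edist x y <= e).

Definition zonoid (R : realType) (n : nat) (B : set 'rV[R]_n) : Prop :=
  compact B /\
  forall e : R, 0 < e -> exists Z, zonotope Z /\ hausdorff_le B Z e.

Definition box (R : realType) (n : nat) (a b : 'rV[R]_n) : set 'rV[R]_n :=
  [set x | forall i, a ord0 i <= x ord0 i <= b ord0 i].
Definition box_vol (R : realType) (n : nat) (a b : 'rV[R]_n) : R :=
  \prod_(i < n) Num.max 0 (b ord0 i - a ord0 i).

(* n-dimensional Lebesgue (outer) measure: infimum of total volumes of
   countable covers by boxes.  On compact (hence Lebesgue measurable) sets
   this is the Lebesgue measure |.|. *)
Definition lebesgue_n (R : realType) (n : nat) (A : set 'rV[R]_n) : \bar R :=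
  ereal_inf [set s : \bar R | exists a b : nat -> 'rV[R]_n,
     A `<=` \bigcup_k box (a k) (b k) /\
     s = (\sum_(0 <= k <oo) (box_vol (a k) (b k))%:E)%E].

(* Main.v *)
Require Import Defs.
From HB Require Import structures.
From mathcomp Require Import all_boot all_order all_algebra.
From mathcomp Require Import all_classical all_reals all_analysis.
From mathcomp Require Import ring lra.
Import Order.TTheory GRing.Theory Num.Theory.
Import numFieldNormedType.Exports.
Local Open Scope classical_set_scope.
Local Open Scope ring_scope.

Set Implicit Arguments. Unset Strict Implicit. Unset Printing Implicit Defensive.

Local Open Scope ereal_scope.

Section Outer.
Variables (R : realType) (n : nat).
Notation V := 'rV[R]_n.+1.
Notation leb := (@lebesgue_n R n.+1).

Lemma box_vol_ge0 (a b : V) : (0 <= box_vol a b)%R.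
Proof. by apply: prodr_ge0 => i _; rewrite le_max lexx. Qed.

Definition covS (X : set V) := [set s : \bar R | exists a b : nat -> V,
     X `<=` \bigcup_k box (a k) (b k) /\
     s = (\sum_(0 <= k <oo) (box_vol (a k) (b k))%:E)%E].

Lemma lebE X : leb X = ereal_inf (covS X). Proof. by []. Qed.

Lemma covS_ge0 X s : covS X s -> 0 <= s.
Proof.
move=> [a [b [_ ->]]]; apply: nneseries_ge0 => k _.
by rewrite lee_fin box_vol_ge0.
Qed.

Lemma leb_ge0 X : 0 <= leb X.
Proof. by apply: le_ereal_inf_tmp => s /covS_ge0. Qed.

Lemma leb_le X a b : X `<=` \bigcup_k box (a k) (b k) ->
  leb X <= \sum_(0 <= k <oo) (box_vol (a k) (b k))%:E.
Proof. by move=> Xab; apply: ereal_inf_lbound; exists a, b. Qed.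

Lemma leb0 : leb set0 = 0.
Proof.
apply/eqP; rewrite eq_le leb_ge0 andbT.
have := @leb_le set0 (fun=> const_mx 1%R) (fun=> 0%R) (sub0set _).
move/le_trans; apply.
rewrite eseries0 // => k _ _.
rewrite /box_vol big_ord_recl !mxE sub0r.
by rewrite (_ : Num.max 0 (-1) = 0)%R ?mul0r // max_l // lerN10.
Qed.

Lemma le_leb : {homo leb : A B / A `<=` B >-> A <= B}.
Proof.
move=> A B AB; apply: ereal_inf_le_tmp => s [a [b [Bab ->]]].
by exists a, b; split => //; apply: subset_trans Bab.
Qed.

Lemma leb_sigma_subadditive : sigma_subadditive leb.
Proof.
move=> A; have [[i ioo]|] := pselect (exists i, leb (A i) = +oo).
  rewrite (eseries_pinfty _ _ ioo) ?leey// => k _.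
  by rewrite -ltNye (lt_le_trans _ (leb_ge0 _)).
rewrite -forallNE => Aoo.
suff add2e (e : {posnum R}) :
    leb (\bigcup_k A k) <= \sum_(i <oo) leb (A i) + e%:num%:E.
  by apply/lee_addgt0Pr => _/posnumP[].
rewrite (le_trans _ (epsilon_trick _ _ _))//; last first.
  by move=> k; exact: leb_ge0.
pose P k (ab : (nat -> V) * (nat -> V)) :=
  A k `<=` \bigcup_j box (ab.1 j) (ab.2 j) /\
  \sum_(j <oo) (box_vol (ab.1 j) (ab.2 j))%:E <= leb (A k) + (e%:num / (2 ^ k.+1)%:R)%:E.
have [G PG] : {G : nat -> (nat -> V) * (nat -> V) & forall k, P k (G k)}.
  apply: (@choice _ _ P) => k; rewrite /P lebE.
  set S := (X in ereal_inf X); move infS : (ereal_inf S) => iS.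
  case: iS infS => [r Sr|Soo|Soo].
  - have en1 : (0 < e%:num / (2 ^ k.+1)%:R)%R by [].
    have /(lb_ereal_inf_adherent en1) : ereal_inf S \is a fin_num by rewrite Sr.
    move=> [x [a [b [Aab ->]]] xS].
    by exists (a, b); split => //; rewrite -Sr; exact/ltW.
  - by have := Aoo k; rewrite lebE Soo.
  - suff : lbound S 0 by move/le_ereal_inf_tmp; rewrite Soo.
    by move=> s /covS_ge0.
pose h (p : nat * nat) := (box_vol ((G p.1).1 p.2) ((G p.1).2 p.2))%:E.
have h0 p : 0 <= h p by rewrite lee_fin box_vol_ge0.
have /card_esym/ppcard_eqP[f] := card_nat2.
apply: (@le_trans _ _ (\esum_(i in setT) h i)).
  apply: (le_trans (@leb_le _ (fun m => (G (f m).1).1 (f m).2)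
                           (fun m => (G (f m).1).2 (f m).2) _)).
    move=> t [i _ /(PG i).1 [j _ Bijt]]; exists (f^-1%FUN (i, j)) => //=.
    by rewrite invK ?inE.
  rewrite nneseries_esumT; last by move=> m; exact: (h0 (f m)).
  rewrite (@reindex_esum _ _ _ setT setT f h) //; exact: splitbij_sub.
rewrite (_ : esum _ _ = \sum_(i <oo) \sum_(j <oo ) h (i, j)); last first.
  rewrite nneseries_esumT; last by move=> i; apply: nneseries_ge0.
  rewrite (@eq_esum _ _ setT _ (fun i => \esum_(j in setT) h (i, j))); last first.
    by move=> i _; rewrite nneseries_esumT.
  rewrite esum_esum //; congr esum; rewrite predeqE => -[i j]; split => //.
apply: lee_lim.
- apply: is_cvg_nneseries => k *.
  by apply: nneseries_ge0 => m *; exact: h0.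
- by apply: is_cvg_nneseries => k *; apply: adde_ge0 => //; exact: leb_ge0.
- by near=> k; apply: lee_sum => i _; exact: (PG i).2.
Unshelve. all: by end_near. Qed.

End Outer.

Local Close Scope ereal_scope.

Lemma max0_split (R : realType) (a b c : R) :
  Num.max 0 (Num.min b c - a) + Num.max 0 (b - Num.max a c) = Num.max 0 (b - a).
Proof.
rewrite (minEle b c) (maxEle a c); case: (leP b c) => ?; case: (leP a c) => ?;
  rewrite !maxEle; repeat case: leP => ?; lra.
Qed.

Section Meas.
Variables (R : realType) (n : nat).
Notation V := 'rV[R]_n.+1.
Notation leb := (@lebesgue_n R n.+1).

HB.instance Definition _ := isOuterMeasure.Build R V leb (@leb0 R n)
  (@leb_ge0 R n) (@le_leb R n) (@leb_sigma_subadditive R n).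

Definition setc (v : V) i (r : R) : V := \row_j (if j == i then r else v ord0 j).

Lemma split_vol (a b : V) i c :
  box_vol a (setc b i (Num.min (b ord0 i) c)) + box_vol (setc a i (Num.max (a ord0 i) c)) b
  = box_vol a b.
Proof.
rewrite /box_vol (bigD1 i) //= [X in _ + X](bigD1 i) //= [X in _ = X](bigD1 i) //=.
rewrite !mxE eqxx.
have E (v w : V) : \prod_(j < n.+1 | j != i) Num.max 0 (w ord0 j - v ord0 j)
  = \prod_(j < n.+1 | j != i) Num.max 0 ((setc w i (Num.min (w ord0 i) c)) ord0 j - v ord0 j).
  by apply: eq_bigr => j ji; rewrite mxE (negbTE ji).
have E' (v w : V) : \prod_(j < n.+1 | j != i) Num.max 0 (w ord0 j - v ord0 j)
  = \prod_(j < n.+1 | j != i) Num.max 0 (w ord0 j - (setc v i (Num.max (v ord0 i) c)) ord0 j).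
  by apply: eq_bigr => j ji; rewrite mxE (negbTE ji).
by rewrite -E -E' -mulrDl max0_split.
Qed.

Definition hle i c : set V := [set x | x ord0 i <= c].
Definition hge i c : set V := [set x | c <= x ord0 i].

Local Open Scope ereal_scope.

Lemma split_cover (X Y Z : set V) (a b : nat -> V) i c :
  X `<=` \bigcup_k box (a k) (b k) ->
  Y `<=` X -> Z `<=` X ->
  (forall x, Y x -> x ord0 i <= c)%R ->
  (forall x, Z x -> c <= x ord0 i)%R ->
  leb Y + leb Z <= \sum_(0 <= k <oo) (box_vol (a k) (b k))%:E.
Proof.
move=> Xab YX ZX Yc Zc.
have -> : \sum_(0 <= k <oo) (box_vol (a k) (b k))%:E =
   \sum_(0 <= k <oo) ((box_vol (a k) (setc (b k) i (Num.min (b k ord0 i) c)))%:E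
           + (box_vol (setc (a k) i (Num.max (a k ord0 i) c)) (b k))%:E).
  by apply: eq_eseriesr => k _; rewrite -EFinD split_vol.
rewrite nneseriesD; last 2 first.
- by move=> k _; rewrite lee_fin box_vol_ge0.
- by move=> k _; rewrite lee_fin box_vol_ge0.
apply: leeD; apply: leb_le.
- move=> x Yx; have [k _ xk] := Xab x (YX x Yx); exists k => // j.
  rewrite mxE; case: eqP => [->|_]; last exact: xk.
  by have /andP[-> /= ?] := xk i; rewrite le_min; apply/andP; split => //; exact: Yc.
- move=> x Zx; have [k _ xk] := Xab x (ZX x Zx); exists k => // j.
  rewrite mxE; case: eqP => [->|_]; last exact: xk.
  by have /andP[? ->] := xk i; rewrite ge_max andbT; apply/andP; split => //; exact: Zc.
Qed.

Lemma hle_cara i c : leb.-caratheodory (hle i c).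
Proof.
apply: le_caratheodory_measurable => X.
change (leb (X `&` hle i c) + leb (X `&` ~` hle i c) <= leb X).
rewrite [leb X]lebE; apply: le_ereal_inf_tmp => s [a [b [Xab ->]]].
apply: (split_cover Xab (i := i) (c := c)); try by move=> x [].
by move=> x [_ /negP]; rewrite -ltNge => /ltW.
Qed.

Lemma hge_cara i c : leb.-caratheodory (hge i c).
Proof.
apply: le_caratheodory_measurable => X.
change (leb (X `&` hge i c) + leb (X `&` ~` hge i c) <= leb X).
rewrite [leb X]lebE; apply: le_ereal_inf_tmp => s [a [b [Xab ->]]].
rewrite addeC; apply: (split_cover Xab (i := i) (c := c)); try by move=> x [].
by move=> x [_ /negP]; rewrite -ltNge => /ltW.
Qed.

Notation M := (caratheodory_type leb).

Lemma box_meas (a b : V) : measurable (box a b : set M).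
Proof.
pose F k : set M := if (k < n.+1)%N then hle (inord k) (b ord0 (inord k)) `&` hge (inord k) (a ord0 (inord k)) else setT.
have -> : (box a b : set M) = \bigcap_(k in setT) F k.
  rewrite predeqE => x; split.
    move=> xab k _; rewrite /F; case: ifP => // _.
    by have /andP[? ?] := xab (inord k); split.
  move=> xF i; have := xF i I; rewrite /F ltn_ord inord_val => -[? ?].
  by apply/andP; split.
apply: bigcap_measurableType => k _; rewrite /F; case: ifP => _ //.
by apply: measurableI; [apply: hle_cara | apply: hge_cara].
Qed.

Definition ratv (p : 'rV[rat]_n.+1) : V := map_mx ratr p.

Lemma open_meas (U : set V) : open U -> measurable (U : set M).
Proof.
move=> oU.
pose F k : set M := match unpickle k with
  | Some pq => if pselect (box (ratv pq.1) (ratv pq.2) `<=` U)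
               then box (ratv pq.1) (ratv pq.2) else set0
  | None => set0 end.
have -> : (U : set M) = \bigcup_(k in setT) F k.
  rewrite predeqE => x; split; last first.
    move=> [k _]; rewrite /F; case: unpickle => // pq.
    by case: pselect => // sU /sU.
  move=> Ux.
  have := oU x Ux; move=> /nbhs_ballP[e /= e0 /= exU].
  have hp : forall j, exists q : rat, ratr q \in `](x ord0 j - e / 2)%R, x ord0 j[.
    by move=> j; apply: rat_in_itvoo; rewrite ltrBlDr ltrDl divr_gt0.
  have hq : forall j, exists q : rat, ratr q \in `](x ord0 j), (x ord0 j + e / 2)%R[.
    by move=> j; apply: rat_in_itvoo; rewrite ltrDl divr_gt0.
  have [fp Hp] := choice hp; have [fq Hq] := choice hq.
  pose p : 'rV[rat]_n.+1 := \row_j fp j; pose q : 'rV[rat]_n.+1 := \row_j fq j.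
  exists (pickle (p, q)) => //; rewrite /F pickleK /=.
  have sU : box (ratv p) (ratv q) `<=` U.
    move=> y yb; apply: exU; split => // i j; rewrite ord1.
    have /andP[y1 y2] := yb j; move: y1 y2; rewrite !mxE => y1 y2.
    have := Hp j; have := Hq j; rewrite !in_itv /= => /andP[? ?] /andP[? ?].
    rewrite /ball /= ltr_norml; apply/andP; split; lra.
  case: pselect => // _ j; rewrite !mxE.
  have := Hp j; have := Hq j; rewrite !in_itv /= => /andP[? ?] /andP[? ?].
  by apply/andP; split; apply: ltW.
apply: bigcup_measurable => k _; rewrite /F; case: unpickle => // pq.
by case: (pselect _) => H /=; [exact: box_meas | exact: measurable0].
Qed.

Lemma closed_meas (K : set V) : closed K -> measurable (K : set M).
Proof.
move=> cK; rewrite -[K]setCK; apply: measurableC; apply: open_meas.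
exact: closed_openC.
Qed.

End Meas.

Lemma itvcc (R : realType) (a b t : R) : `[a,b]%classic t <-> a <= t <= b.
Proof. by rewrite /= in_itv. Qed.

Section Compact.
Variables (R : realType) (n : nat).
Notation V := 'rV[R]_n.

Lemma mink_compact (A B : set V) : compact A -> compact B -> compact (mink_sum A B).
Proof.
move=> cA cB.
have -> : mink_sum A B = (fun p : V * V => p.1 + p.2) @` (A `*` B).
  rewrite predeqE => x; split.
    by move=> [a Aa [b Bb <-]]; exists (a, b).
  by move=> [[a b] [/= Aa Bb] <-]; exists a => //; exists b.
apply: continuous_compact; last exact: compact_setX.
by apply: continuous_subspaceT => p; apply: add_continuous.
Qed.

Lemma seg_compact (u : V) (a b : R) : compact [set t *: u | t in `[a, b]].
Proof.
apply: continuous_compact; last exact: segment_compact.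
by apply: continuous_subspaceT => t; apply: scalel_continuous.
Qed.

End Compact.

Section Seg.
Variables (R : realType) (n : nat).
Notation V := 'rV[R]_n.+1.
Notation leb := (@lebesgue_n R n.+1).
Notation M := (caratheodory_type leb).
Local Open Scope ereal_scope.

Lemma cara_eq (A X : set V) : measurable (A : set M) ->
  leb X = leb (X `&` A) + leb (X `&` ~` A).
Proof. by move=> mA; exact: mA X. Qed.

Definition tr (X : set V) (v : V) := [set (x + v)%R | x in X].

Lemma leb_tr_le X v : leb (tr X v) <= leb X.
Proof.
rewrite [leb X]lebE; apply: le_ereal_inf_tmp => s [a [b [Xab ->]]].
have -> : \sum_(0 <= k <oo) (box_vol (a k) (b k))%:E =
          \sum_(0 <= k <oo) (box_vol (a k + v) (b k + v))%:E.
  apply: eq_eseriesr => k _; congr EFin; apply: eq_bigr => i _.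
  by rewrite !mxE opprD addrACA subrr addr0.
apply: leb_le => _ [x Xx <-]; have [k _ xk] := Xab x Xx; exists k => // i.
by rewrite !mxE !lerD2r.
Qed.

Lemma leb_tr X v : leb (tr X v) = leb X.
Proof.
apply/eqP; rewrite eq_le leb_tr_le /=.
apply: le_trans (leb_tr_le (tr X v) (- v)%R).
apply: le_leb => x Xx; exists (x + v)%R; first by exists x.
by rewrite addrK.
Qed.

Lemma compact_meas (K : set V) : compact K -> measurable (K : set M).
Proof. by move=> cK; apply: closed_meas; apply: compact_closed. Qed.

End Seg.

Section SegLemma.
Variables (R : realType) (n : nat).
Notation V := 'rV[R]_n.+1.
Notation leb := (@lebesgue_n R n.+1).
Notation M := (caratheodory_type leb).
Variable u : V.

Definition sg : set V := [set t *: u | t in `[0, 1]].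

Lemma seg_main (K L : set V) : compact K -> convex_setn K -> compact L -> K `<=` L ->
  (leb (mink_sum K sg) + leb L <= leb (mink_sum L sg) + leb K)%E.
Proof.
move=> cK convK cL KL.
pose D := mink_sum L sg `\` mink_sum K sg.
pose W := \bigcup_(m in setT) mink_sum K [set t *: u | t in `[(m.+1%:R)^-1, m.+1%:R]].
pose P2 := (L `&` ~` K) `&` W.
pose P1 := (L `&` ~` K) `&` ~` W.
have hW x : W x <-> exists t, 0 < t /\ K (x - t *: u).
  split.
    move=> [m _ [k Kk [_ [t /itvcc/andP[t1 t2] <-] <-]]].
    exists t; split; last by rewrite addrK.
    by apply: lt_le_trans t1; rewrite invr_gt0.
  move=> [t [t0 Kt]]; exists (Num.truncn (t + t^-1)) => //.
  exists (x - t *: u) => //; exists (t *: u); last by rewrite subrK.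
  exists t => //; apply/itvcc.
  have h := truncnS_gt (t + t^-1); set m := (Num.truncn _).+1%:R in h *.
  have m0 : 0 < m by rewrite ltr0n.
  have tinv : 0 < t^-1 by rewrite invr_gt0.
  apply/andP; split; last by apply: ltW; lra.
  rewrite invf_ple ?posrE //; apply: ltW; lra.
have mK : measurable (K : set M) by exact: compact_meas.
have mL : measurable (L : set M) by exact: compact_meas.
have mKs : measurable (mink_sum K sg : set M).
  by apply: compact_meas; apply: mink_compact => //; exact: seg_compact.
have mW : measurable (W : set M).
  apply: bigcup_measurable => m _; apply: compact_meas.
  by apply: mink_compact => //; exact: seg_compact.
have mP1 : measurable (P1 : set M).
  by apply: measurableI; [apply: measurableI => //; apply: measurableC|apply: measurableC].
have F1 : P1 `<=` D.
  move=> x [[Lx nKx] nWx]; split.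
    exists x => //; exists 0 => //; first by exists 0; rewrite ?scale0r //; apply/itvcc; rewrite lexx ler01.
    by rewrite addr0.
  move=> [k Kk [_ [t /itvcc/andP[t0 t1] <-] xE]].
  have [tz|tp] := eqVneq t 0.
    by apply: nKx; rewrite -xE tz scale0r addr0.
  apply: nWx; apply/hW; exists t; split; first by rewrite lt_neqAle eq_sym tp.
  by rewrite -xE addrK.
have F2 : tr P2 u `<=` D.
  move=> _ [x [[Lx nKx] /hW [t [t0 Kt]]] <-]; split.
    exists x => //; exists u => //; exists 1; rewrite ?scale1r //; apply/itvcc; by rewrite lexx ler01.
  move=> [k Kk [_ [s /itvcc/andP[s0 s1] <-] xE]].
  have [s1e|s1n] := eqVneq s 1.
    by apply: nKx; move: xE; rewrite s1e scale1r => /addIr <-.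
  have r0 : 0 < 1 - s by rewrite subr_gt0 lt_neqAle s1n.
  apply: nKx.
  have -> : x = (t / (t + (1 - s))) *: k + (1 - t / (t + (1 - s))) *: (x - t *: u).
    have kx : k = x + (1 - s) *: u.
      by apply/(addIr (s *: u)); rewrite xE -addrA -scalerDl subrK scale1r.
    rewrite kx; apply/rowP => j; rewrite !mxE; field; lra.
  apply: convK => //.
    by apply: divr_ge0; lra.
  by rewrite ler_pdivrMr; lra.
have F3 : P1 `&` tr P2 u = set0.
  rewrite predeqE => y; split => // -[[[Ly nKy] nWy] [x [[Lx nKx] /hW [t [t0 Kt]]] xy]].
  apply: nWy; apply/hW; exists (t + 1); split; first lra.
  by rewrite -xy scalerDl scale1r opprD addrA (addrAC x u) addrK.
have F4 : L `&` ~` K `<=` P1 `|` P2.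
  by move=> x Lx; have [Wx|nWx] := pselect (W x); [right|left].
have eq1 : leb (mink_sum L sg) = (leb (mink_sum K sg) + leb D)%E.
  rewrite (cara_eq _ mKs); congr (leb _ + leb _)%E.
  rewrite setIidr // => _ [k Kk [s ss <-]]; exists k; [exact: KL|by exists s].
have eq2 : leb L = (leb K + leb (L `&` ~` K))%E.
  by rewrite (cara_eq _ mK) setIidr.
have ineq : (leb (L `&` ~` K) <= leb D)%E.
  apply: (le_trans (le_leb F4)); apply: (le_trans (outer_measureU2 _ _ _)).
  change (leb P1 + leb P2 <= leb D)%E.
  have -> : leb P2 = leb (tr P2 u) by rewrite leb_tr.
  have -> : (leb P1 + leb (tr P2 u) = leb (P1 `|` tr P2 u))%E.
    rewrite (cara_eq (P1 `|` tr P2 u) mP1) setUK; congr (_ + leb _)%E.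
    rewrite setIUl setICr set0U; apply/esym/setIidPl => y Ty P1y.
    by move: (conj P1y Ty); change ((P1 `&` tr P2 u) y -> False); rewrite F3.
  by apply: le_leb => y [/F1|/F2].
rewrite eq1 eq2 -addeA (addeC (leb D)) addeA addeA; apply: leeD => //.
Qed.

End SegLemma.

Section Fin.
Variables (R : realType) (n : nat).
Notation V := 'rV[R]_n.+1.
Notation leb := (@lebesgue_n R n.+1).

Lemma coord_le_norm (x : V) j : `|x ord0 j| <= `|x|.
Proof.
rewrite [leRHS]/Num.norm /= mx_normrE.
by apply/bigmax_geP; right; exists (ord0, j).
Qed.

Lemma compact_coord_bound (K : set V) : compact K ->
  exists r : R, forall x, K x -> forall j, `|x ord0 j| <= r.
Proof.
move=> /compact_bounded [M [Mreal HM]].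
exists (M + 1) => x Kx j; apply: le_trans (coord_le_norm x j) _.
by apply: (HM (M + 1)) => //; rewrite ltrDl.
Qed.

Lemma leb_box_fin (a b : V) : (leb (box a b) < +oo)%E.
Proof.
pose a' : nat -> V := fun k => if k is 0 then a else const_mx 1.
pose b' : nat -> V := fun k => if k is 0 then b else 0.
apply: (le_lt_trans (@leb_le R n _ a' b' _)).
  by move=> x xab; exists 0%N.
have -> : (\sum_(0 <= k <oo) (box_vol (a' k) (b' k))%:E)%E = (box_vol a b)%:E.
  apply: lim_near_cst => //; near=> N.
  have N0 : (0 < N)%N by near: N; exists 1%N.
  rewrite -(prednK N0) big_nat_recl // big1 ?adde0 // => k _.
  rewrite /a' /b' /box_vol big_ord_recl !mxE sub0r.
  by rewrite (_ : Num.max 0 (-1) = 0)%R ?mul0r // max_l // lerN10.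
by rewrite ltry.
Unshelve. all: by end_near. Qed.

Lemma leb_compact_fin (K : set V) : compact K -> leb K \is a fin_num.
Proof.
move=> /compact_coord_bound [r Hr].
rewrite ge0_fin_numE; last exact: leb_ge0.
apply: le_lt_trans (leb_box_fin (const_mx (- r)) (const_mx r)).
apply: le_leb => x Kx j; rewrite !mxE -ler_norml; exact: Hr.
Qed.

End Fin.

Section Mink.
Variables (R : realType) (n : nat).
Notation V := 'rV[R]_n.+1.

Lemma mink_sumA (A B C : set V) :
  mink_sum (mink_sum A B) C = mink_sum A (mink_sum B C).
Proof.
rewrite predeqE => x; split.
  move=> [_ [a Aa [b Bb <-]] [c Cc <-]]; exists a => //; exists (b + c).
    by exists b => //; exists c.
  by rewrite addrA.
move=> [a Aa [_ [b Bb [c Cc <-]] <-]]; exists (a + b).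
  by exists a => //; exists b.
by exists c => //; rewrite addrA.
Qed.

Lemma mink_sumC (A B : set V) : mink_sum A B = mink_sum B A.
Proof.
rewrite predeqE => x; split; move=> [a Aa [b Bb <-]]; exists b => //; exists a => //;
  by rewrite addrC.
Qed.

Lemma mink_sub (A A' B B' : set V) : A `<=` A' -> B `<=` B' ->
  mink_sum A B `<=` mink_sum A' B'.
Proof. by move=> AA BB x [a Aa [b Bb <-]]; exists a; [exact: AA|exists b => //; exact: BB]. Qed.

Lemma mink_set0 (A : set V) : mink_sum A [set 0] = A.
Proof.
rewrite predeqE => x; split; first by move=> [a Aa [_ -> <-]]; rewrite addr0.
by move=> Ax; exists x => //; exists 0 => //; rewrite addr0.
Qed.

Lemma tr_mink (A : set V) a : tr A a = mink_sum A [set a].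
Proof.
rewrite predeqE => x; split; first by move=> [y Ay <-]; exists y => //; exists a.
by move=> [y Ay [_ -> <-]]; exists y.
Qed.

Lemma mink_trl (A B : set V) a : mink_sum (tr A a) B = tr (mink_sum A B) a.
Proof.
by rewrite !tr_mink mink_sumA (mink_sumC [set a]) -mink_sumA.
Qed.

Lemma tr_compact (A : set V) a : compact A -> compact (tr A a).
Proof. by move=> cA; rewrite tr_mink; apply: mink_compact => //; exact: compact_set1. Qed.

Lemma mink_convex (A B : set V) : convex_setn A -> convex_setn B ->
  convex_setn (mink_sum A B).
Proof.
move=> cA cB _ _ t [a1 Aa1 [b1 Bb1 <-]] [a2 Aa2 [b2 Bb2 <-]] t0 t1.
exists (t *: a1 + (1 - t) *: a2); first exact: cA.
exists (t *: b1 + (1 - t) *: b2); first exact: cB.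
by rewrite !scalerDr addrACA.
Qed.

Lemma tr_convex (A : set V) a : convex_setn A -> convex_setn (tr A a).
Proof.
move=> cA _ _ t [x Ax <-] [y Ay <-] t0 t1; exists (t *: x + (1 - t) *: y).
  exact: cA.
by apply/rowP => j; rewrite !mxE; ring.
Qed.

Definition zset k (a b : 'I_k -> V) : set V :=
  [set z | exists t : 'I_k -> R, (forall i, 0 <= t i <= 1) /\
                  z = \sum_(i < k) ((1 - t i) *: a i + t i *: b i)].

Lemma zset0 (a b : 'I_0 -> V) : zset a b = [set 0].
Proof.
rewrite predeqE => x; split; first by move=> [t [_ ->]]; rewrite big_ord0.
by move=> ->; exists (fun=> 0); split => [[]//|]; rewrite big_ord0.
Qed.

Lemma zsetS k (a b : 'I_k.+1 -> V) :
  zset a b = tr (mink_sum (zset (fun i => a (widen_ord (leqnSn k) i))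
                                (fun i => b (widen_ord (leqnSn k) i)))
                          [set t *: (b ord_max - a ord_max) | t in `[0, 1]])
                (a ord_max).
Proof.
rewrite predeqE => x; split.
  move=> [t [t01 ->]]; rewrite big_ord_recr /=.
  exists (\sum_(i < k) ((1 - t (widen_ord (leqnSn k) i)) *: a (widen_ord (leqnSn k) i) +
        t (widen_ord (leqnSn k) i) *: b (widen_ord (leqnSn k) i)) + t ord_max *: (b ord_max - a ord_max)).
    exists (\sum_(i < k) ((1 - t (widen_ord (leqnSn k) i)) *: a (widen_ord (leqnSn k) i) +
        t (widen_ord (leqnSn k) i) *: b (widen_ord (leqnSn k) i))).
      by exists (fun i => t (widen_ord (leqnSn k) i)); split.
    by exists (t ord_max *: (b ord_max - a ord_max)) => //; exists (t ord_max) => //; apply/itvcc.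
  rewrite -addrA; congr (_ + _); apply/rowP => j; rewrite !mxE; ring.
move=> [_ [_ [t' [t01 ->]] [_ [s /itvcc s01 <-]] <-]] <-.
pose t : 'I_k.+1 -> R := fun i => if insub (val i) is Some j then t' j else s.
have tw i : t (widen_ord (leqnSn k) i) = t' i.
  by rewrite /t /= insubT /=; [exact: ltn_ord|move=> ?; congr t'; apply: val_inj].
have tm : t ord_max = s by rewrite /t insubF //= ltnn.
exists t; split.
  by move=> i; rewrite /t; case: insub => // j; exact: t01.
rewrite big_ord_recr /= tm; under [X in _ = X + _]eq_bigr do rewrite tw.
rewrite -addrA; congr (_ + _); apply/rowP => j; rewrite !mxE; ring.
Qed.

End Mink.

Section Zono.
Variables (R : realType) (n : nat).
Notation V := 'rV[R]_n.+1.
Notation leb := (@lebesgue_n R n.+1).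

Lemma sg_convex (u : V) : convex_setn (sg u).
Proof.
move=> _ _ t [s1 /itvcc/andP[s10 s11] <-] [s2 /itvcc/andP[s20 s21] <-] t0 t1.
exists (t * s1 + (1 - t) * s2).
  apply/itvcc; apply/andP; split; first by apply: addr_ge0; apply: mulr_ge0 => //; lra.
  nra.
by apply/rowP => j; rewrite !mxE; ring.
Qed.

Lemma zset_compact k (a b : 'I_k -> V) : compact (zset a b).
Proof.
elim: k a b => [|k IH] a b; first by rewrite zset0; exact: compact_set1.
rewrite zsetS; apply: tr_compact; apply: mink_compact => //; exact: seg_compact.
Qed.

Lemma zset_convex k (a b : 'I_k -> V) : convex_setn (zset a b).
Proof.
elim: k a b => [|k IH] a b.
  by rewrite zset0 => _ _ t -> -> _ _; rewrite !scaler0 addr0.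
rewrite zsetS; apply: tr_convex; apply: mink_convex => //; exact: sg_convex.
Qed.

Lemma zono_ineq (K C : set V) : compact K -> convex_setn K -> compact C -> C !=set0 ->
  forall k (a b : 'I_k -> V),
  (leb (mink_sum K (zset a b)) + leb (mink_sum K C) <=
   leb (mink_sum (mink_sum K (zset a b)) C) + leb K)%E.
Proof.
move=> cK convK cC [c Cc]; elim=> [|k IH] a b.
  by rewrite zset0 mink_set0 addeC.
set Zk := zset _ _ in IH *.
have := IH (fun i => a (widen_ord (leqnSn k) i)) (fun i => b (widen_ord (leqnSn k) i)).
set Z' := zset _ _ => IH'.
set am := a ord_max; set u := b ord_max - am.
pose K' := mink_sum K Z'; pose L := mink_sum K' C.
have cK' : compact K' by apply: mink_compact => //; exact: zset_compact.
have convK' : convex_setn K' by apply: mink_convex => //; exact: zset_convex.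
have cL : compact L by exact: mink_compact.
have e1 : mink_sum K (zset a b) = tr (mink_sum K' (sg u)) am.
  by rewrite zsetS mink_sumC mink_trl -/am -/u (mink_sumC _ K) -mink_sumA.
have e2 : mink_sum (mink_sum K (zset a b)) C = tr (mink_sum L (sg u)) am.
  by rewrite e1 mink_trl mink_sumA (mink_sumC (sg u) C) -mink_sumA.
rewrite e2 e1 !leb_tr.
have seg : (leb (mink_sum K' (sg u)) + leb L <= leb (mink_sum L (sg u)) + leb K')%E.
  have := @seg_main R n u (tr K' c) L (tr_compact (a:=c) cK') (tr_convex (a:=c) convK') cL.
  rewrite mink_trl !leb_tr; apply.
  by move=> _ [x K'x <-]; exists x => //; exists c.
have := leeD seg IH'; rewrite -/K' -/L.
rewrite (addeC (leb (mink_sum K' (sg u)))) (addeC (leb (mink_sum L (sg u)))).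
rewrite addeACA [X in (_ <= X)%E]addeACA (addeC (leb K')) leeD2lE //.
by rewrite fin_numD !leb_compact_fin.
Qed.

End Zono.

Section Cube.
Variables (R : realType) (n : nat).
Notation V := 'rV[R]_n.+1.
Notation leb := (@lebesgue_n R n.+1).
Notation M := (caratheodory_type leb).

Definition cube (e : R) : set V := box (const_mx (- e)) (const_mx e).

Lemma cubeP e x : cube e x <-> forall j, `|x ord0 j| <= e.
Proof.
split => h j; first by have := h j; rewrite !mxE ler_norml.
by rewrite !mxE -ler_norml.
Qed.

Lemma cube_compact e : compact (cube e).
Proof.
have -> : cube e = [set v : V | forall i, `[- e, e]%classic (v ord0 i)].
  rewrite predeqE => x; split => h i; [apply/itvcc; have := h i|have /itvcc := h i];
    by rewrite !mxE.
exact: (@rV_compact _ n.+1 (fun i => `[- e, e]%classic)) (fun=> @segment_compact _ _ _).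
Qed.

Lemma cube_convex e : convex_setn (cube e).
Proof.
move=> x y t /cubeP hx /cubeP hy t0 t1; apply/cubeP => j; rewrite !mxE.
have t1' : (0 <= 1 - t)%R by rewrite subr_ge0.
apply: le_trans (ler_normD _ _) _; rewrite !normrM (ger0_norm t0) (ger0_norm t1').
apply: le_trans (lerD (ler_wpM2l t0 (hx j)) (ler_wpM2l t1' (hy j))) _.
by rewrite -mulrDl subrKC mul1r.
Qed.

Lemma cube0 e : 0 <= e -> cube e 0.
Proof. by move=> e0; apply/cubeP => j; rewrite mxE normr0. Qed.

Lemma cube_le e1 e2 : e1 <= e2 -> cube e1 `<=` cube e2.
Proof. by move=> e12 x /cubeP h; apply/cubeP => j; apply: le_trans (h j) e12. Qed.

Lemma cube_add e1 e2 : mink_sum (cube e1) (cube e2) `<=` cube (e1 + e2).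
Proof.
move=> _ [x /cubeP hx [y /cubeP hy <-]]; apply/cubeP => j; rewrite mxE.
by apply: le_trans (ler_normD _ _) _; apply: lerD.
Qed.

Local Open Scope ereal_scope.

Lemma cont_compact (K : set V) (d : R) : compact K -> (0 < d)%R ->
  exists N, forall m, (N <= m)%N ->
    leb (mink_sum K (cube (m.+1%:R^-1))) <= leb K + d%:E.
Proof.
move=> cK d0.
pose F m := mink_sum K (cube (m.+1%:R^-1)).
have cF m : compact (F m).
  by apply: mink_compact => //; exact: cube_compact.
have capF : \bigcap_m F m = K.
  rewrite predeqE => x; split; last first.
    move=> Kx m _; exists x => //; exists 0%R; last by rewrite addr0.
    by apply: cube0; rewrite invr_ge0.
  have clK : closed K by exact: compact_closed.
  move=> Fx; apply: clK => B /nbhs_ballP[e /= e0 eB].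
  have [m me] : exists m : nat, (m.+1%:R^-1 < e)%R.
    exists (Num.truncn e^-1); rewrite invf_plt ?posrE //.
    exact: truncnS_gt.
  have [k Kk [c /cubeP hc xE]] := Fx m I.
  exists k; split => //; apply: eB; split => // i j; rewrite ord1.
  rewrite -ball_normE /ball_ /=.
  have -> : (x ord0 j - k ord0 j = c ord0 j)%R by rewrite -xE mxE addrAC subrr add0r.
  exact: le_lt_trans (hc j) me.
pose mu0 := OuterMeasure.clone R V leb _.
have mF m : measurable (F m : set (caratheodory_type mu0)) by exact: compact_meas.
have : (mu0 \o F) x @[x --> \oo] --> mu0 (\bigcap_n F n).
  apply: (@nonincreasing_cvg_mu _ (caratheodory_type mu0) R (mu0 : set (caratheodory_type mu0) -> \bar R) F) => //.
  - by rewrite -ge0_fin_numE ?leb_ge0 //; apply: leb_compact_fin.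
  - by rewrite capF; apply: compact_meas.
  - move=> i j ij; rewrite subsetEset; apply: mink_sub => //; apply: cube_le.
    by rewrite lef_pV2 ?posrE // ler_nat.
rewrite capF => Hc.
have fK : leb K \is a fin_num by exact: leb_compact_fin.
have : (fun m => leb (F m)) @ \oo --> (fine (leb K))%:E by rewrite fineK.
move=> /fine_cvgP [_] /cvgr_lt /(_ (fine (leb K) + d)%R).
rewrite ltrDl => /(_ d0) [N _ HN]; exists N => m Nm.
have := HN m Nm; rewrite /= -lte_fin fineK ?leb_compact_fin // => /ltW.
by rewrite EFinD fineK // leb_compact_fin.
Qed.

End Cube.

Lemma leb_dim0 (R : realType) (X : set 'rV[R]_0) : lebesgue_n X = +oo%E.
Proof.
apply/eqP; rewrite eq_le leey /=; apply: le_ereal_inf_tmp => s [a [b [_ ->]]].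
have -> : (\sum_(0 <= k <oo) (box_vol (a k) (b k))%:E = \sum_(0 <= k <oo) 1%:E)%E.
  by apply: eq_eseriesr => k _; rewrite /box_vol big_ord0.
rewrite leye_eq; apply/eqP/cvg_lim => //.
have -> : (fun N => \sum_(0 <= k < N) (1%:E : \bar R))%E = (fun N => (N%:R : R)%:E).
  apply: funext => N; rewrite sumEFin; congr EFin.
  by rewrite big_const_nat subn0 iter_addr addr0.
by apply/cvgenyP.
Qed.

Section Main.
Variables (R : realType) (n : nat).
Notation V := 'rV[R]_n.+1.
Notation leb := (@lebesgue_n R n.+1).

Lemma coord_le_edist (x y : V) j : `|x ord0 j - y ord0 j| <= Defs.edist x y.
Proof.
rewrite /Defs.edist -sqrtr_sqr ler_sqrt; last by apply: sumr_ge0 => i _; exact: sqr_ge0.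
rewrite (bigD1 j) //= lerDl; apply: sumr_ge0 => i _; exact: sqr_ge0.
Qed.

Lemma haus_incl (B Z : set V) e : hausdorff_le B Z e ->
  B `<=` mink_sum Z (cube e) /\ Z `<=` mink_sum B (cube e).
Proof.
move=> [h1 h2]; split.
  move=> x Bx; have [y [Zy d]] := h1 x Bx; exists y => //; exists (x - y).
    by apply/cubeP => j; rewrite !mxE; apply: le_trans (coord_le_edist x y j) d.
  by rewrite addrC subrK.
move=> y Zy; have [x [Bx d]] := h2 y Zy; exists x => //; exists (y - x).
  by apply/cubeP => j; rewrite !mxE distrC; apply: le_trans (coord_le_edist x y j) d.
by rewrite addrC subrK.
Qed.

Lemma main_pos (A B C : set V) : compact A -> convex_setn A -> zonoid B ->
  compact C -> C !=set0 ->
  (leb (mink_sum A B) + leb (mink_sum A C) <=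
   leb (mink_sum (mink_sum A B) C) + leb A)%E.
Proof.
move=> cA convA [cB HB] cC C0.
have cABC : compact (mink_sum (mink_sum A B) C).
  by apply: mink_compact => //; exact: mink_compact.
apply/lee_addgt0Pr => e e0.
have d0 : 0 < e / 2 by rewrite divr_gt0.
have [N1 H1] := cont_compact cABC d0.
have [N2 H2] := cont_compact cA d0.
pose m := maxn N1 N2; pose r : R := m.+1%:R^-1; pose ep := r / 2.
have r0 : 0 < r by rewrite invr_gt0.
have ep0 : 0 < ep by rewrite divr_gt0.
have [Z [[k [a [b ZE]]] Hd]] := HB ep ep0.
have [iBZ iZB] := haus_incl Hd.
pose A' := mink_sum A (cube ep).
have cA' : compact A' by apply: mink_compact => //; exact: cube_compact.
have convA' : convex_setn A' by apply: mink_convex => //; exact: cube_convex.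
have zi := zono_ineq cA' convA' cC C0 a b.
have ZZ : Z = zset a b by rewrite ZE.
rewrite -ZZ in zi.
have i1 : mink_sum A B `<=` mink_sum A' Z.
  move=> _ [x Ax [y /iBZ [z Zz [c cc <-]] <-]].
  exists (x + c); first by exists x => //; exists c.
  by exists z => //; rewrite addrAC addrA.
have i2 : mink_sum A C `<=` mink_sum A' C.
  apply: mink_sub => // x Ax; exists x => //; exists 0; last by rewrite addr0.
  by apply: cube0; apply: ltW.
have i3 : mink_sum (mink_sum A' Z) C `<=` mink_sum (mink_sum (mink_sum A B) C) (cube r).
  move=> _ [_ [_ [x Ax [c1 c1c <-]] [z /iZB [y By [c2 c2c <-]] <-]] [w Cw <-]].
  exists ((x + y) + w).
    by exists (x + y) => //; [exists x => //; exists y | exists w].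
  exists (c1 + c2).
    apply: (cube_le (e1 := ep + ep)); first by rewrite /ep -splitr.
    by apply: cube_add; exists c1 => //; exists c2.
  by apply/rowP => j; rewrite !mxE; ring.
have i4 : A' `<=` mink_sum A (cube r).
  by apply: mink_sub => //; apply: cube_le; rewrite /ep; lra.
have e2 : e = e / 2 + e / 2 by rewrite -splitr.
apply: (le_trans (leeD (le_leb i1) (le_leb i2))).
apply: (le_trans zi).
apply: (le_trans (leeD (le_leb i3) (le_leb i4))).
apply: (le_trans (leeD (H1 m (leq_maxl _ _)) (H2 m (leq_maxr _ _)))).
rewrite [X in (_ <= _ + X%:E)%E]e2 EFinD.
rewrite addeACA; exact: lexx.
Qed.

End Main.

Unset Implicit Arguments.

Theorem theorem3p12 (R : realType) (n : nat) (A B C : set 'rV[R]_n) :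
  compact A -> convex_setn A ->
  zonoid B ->
  compact C -> C !=set0 ->
  (lebesgue_n (mink_sum (mink_sum A B) C) + lebesgue_n A >=
   lebesgue_n (mink_sum A B) + lebesgue_n (mink_sum A C))%E.
Proof.
case: n A B C => [|n] A B C cA convA zB cC C0.
  by rewrite !leb_dim0.
exact: main_pos.
Qed.
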